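(* For every integer $n>0$, $\mathrm{DE2}(n)+\mathrm{DE2}(n-3)$ equals the number of partitions of $n$ into parts each of which is greater than $1$ and not divisible by $4$.
   Context: For a nonnegative integer $n$, $\mathrm{DE2}(n)$ denotes the number of partitions of $n$ in which no even part is repeated, and the largest part is odd and appears at least twice (so $\mathrm{DE2}(0)=0$); set $\mathrm{DE2}(m)=0$ for $m<0$. Equivalently, $\sum_{n\ge0}\mathrm{DE2}(n)q^n=\sum_{n\ge0}\frac{(-q^2;q^2)_n q^{4n+2}}{(q;q^2)_{n+1}}$, where $(a;q)_n=\prod_{j=0}^{n-1}(1-aq^j)$. *)

(* Defs.v *)
From mathcomp Require Import all_boot.
Set Implicit Arguments. Unset Strict Implicit. Unset Printing Implicit Defensive.

(* A partition of n is represented by its multiplicity function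
   m : 'I_n.+1 -> 'I_n.+1, where m i is the number of times the part i
   occurs (every multiplicity is at most n, every part at most n). This is a bijection with
   the usual partitions of n. *)
Definition partition_of (n : nat) (m : {ffun 'I_n.+1 -> 'I_n.+1}) : bool :=
  (nat_of_ord (m ord0) == 0) && (\sum_(i < n.+1) i * m i == n).

Definition occurs (n : nat) (m : {ffun 'I_n.+1 -> 'I_n.+1}) (i : 'I_n.+1) : bool :=
  0 < m i.

Definition DE2_partition (n : nat) (m : {ffun 'I_n.+1 -> 'I_n.+1}) : bool :=
  [&& partition_of m,
      [forall i : 'I_n.+1, ~~ odd i ==> (m i <= 1)] &
      [exists i : 'I_n.+1,
         [&& odd i, 2 <= m i & [forall j : 'I_n.+1, (i < j) ==> ~~ occurs m j]]]].

Definition DE2 (n : nat) : nat := #|[set m | @DE2_partition n m]|.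

Definition P4_partition (n : nat) (m : {ffun 'I_n.+1 -> 'I_n.+1}) : bool :=
  partition_of m &&
  [forall i : 'I_n.+1, occurs m i ==> ((1 < i) && ~~ (4 %| i))].

Definition P4 (n : nat) : nat := #|[set m | @P4_partition n m]|.

(* Main.v *)
Require Import Defs.
From mathcomp Require Import all_boot all_algebra ring zify.
Set Implicit Arguments. Unset Strict Implicit. Unset Printing Implicit Defensive.
Import GRing.Theory Num.Theory.
Local Open Scope ring_scope.


Notation P := {poly int}.

Definition cong (K : nat) (p q : P) := exists r : P, p - q = r * 'X^K.

Lemma cong_refl K p : cong K p p.
Proof. by exists 0; rewrite subrr mul0r. Qed.
Lemma cong_sym K p q : cong K p q -> cong K q p.
Proof. by case=> r e; exists (- r); rewrite mulNr -e opprB. Qed.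
Lemma cong_trans K p q s : cong K p q -> cong K q s -> cong K p s.
Proof. by case=> r e [r' e']; exists (r + r'); rewrite mulrDl -e -e'; ring. Qed.
Lemma congD K p q p' q' : cong K p q -> cong K p' q' -> cong K (p + p') (q + q').
Proof. by case=> r e [r' e']; exists (r + r'); rewrite mulrDl -e -e'; ring. Qed.
Lemma congN K p q : cong K p q -> cong K (- p) (- q).
Proof. by case=> r e; exists (- r); rewrite mulNr -e; ring. Qed.
Lemma congB K p q p' q' : cong K p q -> cong K p' q' -> cong K (p - p') (q - q').
Proof. by move=> h1 h2; apply: congD => //; apply: congN. Qed.
Lemma congM K p q p' q' : cong K p q -> cong K p' q' -> cong K (p * p') (q * q').
Proof.
case=> r e [r' e']; exists (r * p' + q * r').
have -> : p * p' - q * q' = (p - q) * p' + q * (p' - q') by ring.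
rewrite e e'; ring.
Qed.
Lemma congMl K a p q : cong K p q -> cong K (a * p) (a * q).
Proof. by apply: congM; apply: cong_refl. Qed.
Lemma congMr K a p q : cong K p q -> cong K (p * a) (q * a).
Proof. by move=> h; apply: congM h (cong_refl _ _). Qed.
Lemma cong_le K K' p q : (K' <= K)%N -> cong K p q -> cong K' p q.
Proof.
move=> le [r e]; exists (r * 'X^(K - K')); rewrite e -mulrA -exprD subnK //.
Qed.
Lemma congX0 K a p : (K <= a)%N -> cong K (p * 'X^a) 0.
Proof. by move=> le; exists (p * 'X^(a - K)); rewrite subr0 -mulrA -exprD subnK. Qed.
Lemma cong_coef K p q k : cong K p q -> (k < K)%N -> p`_k = q`_k.
Proof.
case=> r e lt; apply/eqP; rewrite -subr_eq0 -coefB e coefMXn lt //.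
Qed.
Lemma cong_prod K (I : Type) (r : seq I) (Q : pred I) (F G : I -> P) :
  (forall i, Q i -> cong K (F i) (G i)) ->
  cong K (\prod_(i <- r | Q i) F i) (\prod_(i <- r | Q i) G i).
Proof.
move=> h; apply: (big_ind2 (cong K)); [exact: cong_refl| |exact: h].
by move=> *; apply: congM.
Qed.
Lemma cong_sum K (I : Type) (r : seq I) (Q : pred I) (F G : I -> P) :
  (forall i, Q i -> cong K (F i) (G i)) ->
  cong K (\sum_(i <- r | Q i) F i) (\sum_(i <- r | Q i) G i).
Proof.
move=> h; apply: (big_ind2 (cong K)); [exact: cong_refl| |exact: h].
by move=> *; apply: congD.
Qed.

Lemma card_coef (K : nat) (A : nat -> nat -> bool) (n : nat) :
  (#|[set m : {ffun 'I_K -> 'I_K} |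
      [forall i : 'I_K, A i (m i)] && (\sum_(i < K) (i * m i)%N == n)%N]|)%:R
  = (\prod_(i < K) \sum_(j < K | A i j) 'X^(i * j) : P)`_n.
Proof.
rewrite (eq_bigr (fun i : 'I_K => \sum_(j < K) (if A i j then 'X^(i * j) else 0)));
  last by move=> i _; rewrite big_mkcond.
rewrite bigA_distr_bigA /= coef_sum.
rewrite -sum1_card big_mkcond /= natr_sum.
apply: eq_bigr => f _; rewrite inE.
case: (boolP [forall i : 'I_K, A i (f i)]) => [/forallP hA|hA] /=.
  rewrite (eq_bigr (fun i : 'I_K => 'X^(i * f i))); last by move=> i _; rewrite hA.
  by rewrite prodrXr coefXn eq_sym; case: eqP.
have [i hi] : exists i : 'I_K, ~~ A i (f i).
  by apply/existsP; rewrite -negb_forall.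
rewrite (bigD1 i) //= (negbTE hi) mul0r coef0 //.
Qed.


Definition A4 (i j : nat) : bool := (j == 0)%N || ((1 < i)%N && ~~ (4 %| i)%N).

Lemma P4_coef n : (P4 n)%:R =
  (\prod_(i < n.+1) \sum_(j < n.+1 | A4 i j) 'X^(i * j) : P)`_n.
Proof.
rewrite /P4 -card_coef; congr (_%:R); apply: eq_card => m; rewrite !inE.
rewrite /P4_partition /partition_of /occurs.
apply/idP/idP.
  case/andP=> /andP[h0 hs] /forallP h; rewrite hs andbT; apply/forallP => i.
  by rewrite /A4; move: (h i); case: (m i) => [[|k] ?] //=.
case/andP=> /forallP h hs; rewrite hs andbT.
have := h ord0; rewrite /A4 /= orbF => -> /=.
apply/forallP => i; move: (h i); rewrite /A4; case: (m i) => [[|k] ?] //=.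
Qed.

Definition AD (i0 i j : nat) : bool :=
  if (i0 < i)%N then (j == 0)%N else if i == i0 then (2 <= j)%N
  else if i == 0%N then (j == 0)%N else odd i || (j <= 1)%N.

Definition BD n (i0 : 'I_n.+1) (m : {ffun 'I_n.+1 -> 'I_n.+1}) : bool :=
  odd i0 && ([forall i : 'I_n.+1, AD i0 i (m i)] && (\sum_(i < n.+1) (i * m i)%N == n)%N).

Lemma DE2_BD n m : DE2_partition m = [exists i0, @BD n i0 m].
Proof.
rewrite /DE2_partition /partition_of /occurs /BD.
apply/idP/idP.
  case/and3P=> /andP[h0 hs] /forallP he /existsP[i0 /and3P[oi0 h2 /forallP hj]].
  apply/existsP; exists i0; rewrite oi0 hs andbT /=; apply/forallP => i.
  rewrite /AD; case: ltnP => [lt|le].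
    by move: (hj i); rewrite lt /= -eqn0Ngt.
  case: eqP => [/val_inj -> //|ne].
  case: eqP => [e|_]; first by move: h0; have -> : i = ord0 by apply: val_inj.
  by move: (he i); case: (odd i).
case/existsP=> i0 /and3P[oi0 /forallP h hs].
have hm0 : (m ord0 == 0 :> nat)%N.
  move: (h ord0); rewrite /AD /=; case: eqP => [e|_ //].
  by move: oi0; rewrite -e.
rewrite hm0 hs /=; apply/andP; split.
  apply/forallP => i; apply/implyP => ei; move: (h i); rewrite /AD.
  case: ltnP => _; first by move/eqP ->.
  case: eqP => [e|_]; first by move: ei; rewrite e oi0.
  by rewrite (negbTE ei) /=; case: eqP => // _ /eqP ->.
apply/existsP; exists i0; rewrite oi0 /=.
move: (h i0); rewrite /AD ltnn eqxx => -> /=.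
apply/forallP => j; apply/implyP => lt; move: (h j); rewrite /AD lt.
by move/eqP ->.
Qed.

Lemma BD_uniq n i0 i1 m : @BD n i0 m -> @BD n i1 m -> i0 = i1.
Proof.
rewrite /BD => /and3P[_ /forallP h0 _] /and3P[_ /forallP h1 _].
have key : forall a b : 'I_n.+1, (forall i : 'I_n.+1, AD a i (m i)) ->
    (forall i : 'I_n.+1, AD b i (m i)) -> ~~ (a < b)%N.
  move=> a b ha hb; apply/negP => lt.
  move: (ha b) (hb b); rewrite /AD lt ltnn eqxx => /eqP ->.
  by [].
have k1 := key i0 i1 h0 h1; have k2 := key i1 i0 h1 h0.
case: (ltngtP i0 i1) => [lt|lt|e]; first by rewrite lt in k1.
  by rewrite lt in k2.
exact: val_inj.
Qed.


Lemma card_exists_uniq (I T : finType) (B : I -> T -> bool) :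
  (forall i i' x, B i x -> B i' x -> i = i') ->
  #|[set x | [exists i, B i x]]| = (\sum_i #|[set x | B i x]|)%N.
Proof.
move=> hu.
rewrite -sum1_card big_mkcond /=.
under [RHS]eq_bigr => i _ do rewrite -sum1_card big_mkcond /=.
rewrite exchange_big /=; apply: eq_bigr => x _; rewrite inE.
case: existsP => [[i hi]|hn].
  rewrite (bigD1 i) //= inE hi big1 //= => j ne; rewrite inE; case: ifP => // hj.
  by rewrite (hu _ _ _ hi hj) eqxx in ne.
rewrite big1 // => i _; rewrite inE; case: ifP => // h.
by case: hn; exists i.
Qed.

Lemma DE2_coef n : (DE2 n)%:R =
  \sum_(i0 < n.+1 | odd i0)
     (\prod_(i < n.+1) \sum_(j < n.+1 | AD i0 i j) 'X^(i * j) : P)`_n.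
Proof.
rewrite /DE2.
have -> : [set m | @DE2_partition n m] = [set m | [exists i0, @BD n i0 m]].
  by apply/setP => m; rewrite !inE DE2_BD.
rewrite card_exists_uniq; last first.
  by move=> i i' x; apply: BD_uniq.
rewrite natr_sum [RHS]big_mkcond /=; apply: eq_bigr => i0 _.
case: ifP => oi0.
  rewrite -card_coef; congr (_%:R); apply: eq_card => m; rewrite !inE /BD oi0 //.
rewrite (_ : [set m | _] = set0) ?cards0 //.
by apply/setP => m; rewrite !inE /BD oi0.
Qed.


Definition O K i : P := \sum_(j < K) 'X^(i * j).
Definition g K i : P := if odd i then O K i else 1 + 'X^i.
Definition Q K m : P := \prod_(1 <= i < m.+1) g K i.
Definition D K k : P := Q K k.*2.+1.
Definition S K L : P := \sum_(k < L) 'X^(k.*2.+1) * D K k.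
Definition T K L : P := \sum_(k < L) 'X^((k.*2.+1).*2) * D K k.

Lemma congX0' K a : (K <= a)%N -> cong K ('X^a) 0.
Proof. by move=> le; rewrite -[X in cong _ X _]mul1r; apply: congX0. Qed.

Lemma cong_sum0 K (I : Type) (r : seq I) (R : pred I) (F : I -> P) :
  (forall i, R i -> cong K (F i) 0) -> cong K (\sum_(i <- r | R i) F i) 0.
Proof.
move=> h; apply: (big_ind (fun x => cong K x 0)); first exact: cong_refl.
  by move=> x y hx hy; rewrite -(addr0 0); apply: congD.
exact: h.
Qed.

Lemma O_inv K i : (1 <= i)%N -> cong K ((1 - 'X^i) * O K i) 1.
Proof.
move=> hi.
have e : (1 : P) - 'X^i ^+ K = (1 - 'X^i) * O K i.
  rewrite -{1}(expr1n _ K) subrXX /O; congr (_ * _); apply: eq_bigr => j _.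
  by rewrite expr1n mul1r exprM.
rewrite -e; rewrite -[X in cong _ _ X](subr0 1); apply: congB; first exact: cong_refl.
rewrite -exprM; apply: congX0'.
by rewrite leq_pmull.
Qed.

Lemma O_big K i : (0 < K)%N -> (K <= i)%N -> cong K (O K i) 1.
Proof.
case: K => // K _ hi; rewrite /O big_ord_recl /= muln0 expr0.
rewrite -[X in cong _ _ X](addr0 1); apply: congD; first exact: cong_refl.
apply: cong_sum0 => j _; apply: congX0'.
rewrite /bump /= add1n; apply: leq_trans hi _; exact: leq_pmulr.
Qed.

Lemma g_big K i : (0 < K)%N -> (K <= i)%N -> cong K (g K i) 1.
Proof.
move=> h0 hi; rewrite /g; case: ifP => _; first exact: O_big.
rewrite -[X in cong _ _ X](addr0 1); apply: congD; first exact: cong_refl.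
exact: congX0'.
Qed.

Lemma QS K m : Q K m.+1 = Q K m * g K m.+1.
Proof. by rewrite /Q big_nat_recr. Qed.

Lemma Q0 K : Q K 0 = 1.
Proof. by rewrite /Q big_geq. Qed.

Lemma Q_big K N m : K = N.+1 -> (N <= m)%N -> cong K (Q K m) (Q K N).
Proof.
move=> eK; elim: m => [|m IH]; first by rewrite leqn0 => /eqP ->; apply: cong_refl.
rewrite leq_eqVlt => /orP[/eqP <-|lt]; first exact: cong_refl.
apply: cong_trans (IH lt); rewrite QS -[X in cong _ _ X]mulr1; apply: congMl.
by apply: g_big; rewrite eK.
Qed.

Lemma D_rec K k : cong K (D K k) (Q K k.*2 + 'X^(k.*2.+1) * D K k).
Proof.
have h : cong K ((1 - 'X^(k.*2.+1)) * D K k) (Q K k.*2).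
  rewrite /D QS /g /= odd_double /= mulrCA -[X in cong _ _ X]mulr1.
  by apply: congMl; apply: O_inv.
have := congD h (cong_refl K ('X^(k.*2.+1) * D K k)).
by rewrite mulrBl mul1r subrK.
Qed.

Lemma Q_even K k : Q K (k.+1).*2 = D K k * (1 + 'X^((k.+1).*2)).
Proof. by rewrite [in LHS]doubleS QS /g /= odd_double /= -doubleS. Qed.

Lemma eq_cong K p q : p = q -> cong K p q.
Proof. by move->; apply: cong_refl. Qed.

Lemma D_inv K k : cong K ((1 - 'X^(k.*2.+1)) * D K k) (Q K k.*2).
Proof.
rewrite /D QS /g /= odd_double /= mulrCA -[X in cong _ _ X](mulr1 (Q K k.*2)).
by apply: congMl; apply: O_inv.
Qed.

Lemma SS K L : S K L.+1 = S K L + 'X^(L.*2.+1) * D K L.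
Proof. by rewrite /S big_ord_recr. Qed.
Lemma TS K L : T K L.+1 = T K L + 'X^((L.*2.+1).*2) * D K L.
Proof. by rewrite /T big_ord_recr. Qed.
Lemma S0 K : S K 0 = 0. Proof. by rewrite /S big_ord0. Qed.
Lemma T0 K : T K 0 = 0. Proof. by rewrite /T big_ord0. Qed.

Lemma Xdd k : 'X^((k.*2.+1).*2) = 'X^(k.*2.+1) * 'X^(k.*2.+1) :> P.
Proof. by rewrite -exprD addnn. Qed.

Lemma D_S K M : cong K (D K M) (1 + S K M.+1 + 'X * S K M).
Proof.
elim: M => [|M IH].
  apply: cong_trans (D_rec K 0) _; rewrite SS !S0 Q0; apply: eq_cong; ring.
apply: cong_trans (D_rec K M.+1) _; rewrite Q_even.
rewrite mulrDr mulr1 -addrA.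
apply: cong_trans (congD IH
   (cong_refl _ (D K M * 'X^((M.+1).*2) + 'X^((M.+1).*2.+1) * D K M.+1))) _.
apply: eq_cong; rewrite !SS !doubleS !exprS; ring.
Qed.

Lemma ST_rel K L : cong K (S K L.+1 - T K L.+1) ('X + 'X^2 * S K L + 'X^3 * T K L).
Proof.
rewrite /S /T -sumrB.
apply: (@cong_trans _ _ (\sum_(k < L.+1) 'X^(k.*2.+1) * Q K k.*2)).
  apply: cong_sum => k _; rewrite Xdd -mulrA -mulrBr; apply: congMl.
  by rewrite -{1}(mul1r (D K k)) -mulrBl; apply: D_inv.
rewrite big_ord_recl /= Q0 expr1 mulr1; apply: eq_cong; rewrite -addrA; congr (_ + _).
rewrite !mulr_sumr -big_split /=; apply: eq_bigr => k _.
rewrite /bump leq0n add1n Q_even Xdd !doubleS !exprS; ring.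
Qed.

Lemma cong_sub0 K a b : cong K a b -> cong K (a - b) 0.
Proof. by move=> h; rewrite -(subrr b); apply: congB h (cong_refl _ _). Qed.

Lemma main_T N : cong N.+1 ((1 - 'X) * Q N.+1 N) (1 + (1 + 'X^3) * T N.+1 N.+1).
Proof.
set K := N.+1.
have hS : cong K (S K K.+1) (S K K).
  rewrite SS -[X in cong _ _ X](addr0 (S K K)); apply: congD; first exact: cong_refl.
  rewrite mulrC; apply: congX0; rewrite -!addnn; lia.
have hT : cong K (T K K.+1) (T K K).
  rewrite TS -[X in cong _ _ X](addr0 (T K K)); apply: congD; first exact: cong_refl.
  rewrite mulrC; apply: congX0; rewrite -!addnn; lia.
have h2 : cong K (S K K - T K K) ('X + 'X^2 * S K K + 'X^3 * T K K).
  apply: cong_trans (ST_rel K K); apply: congB; apply: cong_sym => //.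
have h1 : cong K (Q K N) (1 + S K K + 'X * S K K).
  apply: cong_trans (cong_sym (Q_big (m := K.*2.+1) _ _)) _ => //.
    by rewrite -!addnn; lia.
  apply: cong_trans (D_S K K) _.
  by apply: congD; [apply: congD; [apply: cong_refl|exact: hS]|apply: cong_refl].
apply: cong_trans (congMl (1 - 'X) h1) _.
have -> : (1 - 'X) * (1 + S K K + 'X * S K K) = (1 + (1 + 'X^3) * T K K) +
   ((S K K - T K K) - ('X + 'X^2 * S K K + 'X^3 * T K K)) by ring.
rewrite -[X in cong _ _ X](addr0 (1 + (1 + 'X^3) * T K K)).
by apply: congD; [apply: cong_refl| apply: cong_sub0].
Qed.


Lemma cong_add0 K a b : cong K b 0 -> cong K (a + b) a.
Proof. by move=> h; rewrite -[X in cong _ _ X](addr0 a); apply: congD (cong_refl _ _) h. Qed.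

Lemma sum_j0 K i : (0 < K)%N -> \sum_(j < K | (nat_of_ord j == 0)%N) 'X^(i * j) = 1 :> P.
Proof.
case: K => // K _; rewrite big_mkcond big_ord_recl /= muln0 expr0 big1 ?addr0 //.
Qed.

Lemma sum_j1 K i : (1 < K)%N -> \sum_(j < K | (nat_of_ord j <= 1)%N) 'X^(i * j) = 1 + 'X^i :> P.
Proof.
case: K => [|[|K]] // _; rewrite big_mkcond big_ord_recl big_ord_recl /=.
rewrite muln0 muln1 expr0 big1 ?addr0 //.
Qed.

Lemma sum_j2 K i : (1 <= i)%N -> (1 < K)%N ->
  cong K (\sum_(j < K | (2 <= nat_of_ord j)%N) 'X^(i * j)) ('X^(i.*2) * O K i).
Proof.
case: K => [|[|K]] // hi _; rewrite big_mkcond big_ord_recl big_ord_recl /=.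
rewrite /O big_ord_recr big_ord_recr /= !add0r !mulrDr mulr_sumr.
apply: cong_sym; apply: cong_trans (cong_add0 _ _) _.
  by rewrite -exprD; apply: congX0'; rewrite -addnn; nia.
apply: cong_trans (cong_add0 _ _) _.
  by rewrite -exprD; apply: congX0'; rewrite -addnn; nia.
apply: eq_cong; apply: eq_bigr => j _; rewrite -exprD /bump /=; congr ('X^_).
rewrite -addnn; lia.
Qed.

Lemma TD_term K i0 : odd i0 -> (i0 < K)%N ->
  cong K (\prod_(i < K) \sum_(j < K | AD i0 i j) 'X^(i * j)) ('X^(i0.*2) * Q K i0).
Proof.
move=> oi0 lt.
have i0p : (0 < i0)%N by case: i0 oi0 lt.
have K1 : (1 < K)%N by lia.
rewrite -(big_mkord xpredT (fun i => \sum_(j < K | AD i0 i j) 'X^(i * j))).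
rewrite (big_cat_nat _ (n := i0.+1)) //=.
rewrite [X in _ * X](eq_big_nat _ _ (F2 := fun=> 1)); last first.
  move=> i /andP[hi _].
  rewrite (eq_bigl (fun j : 'I_K => nat_of_ord j == 0)%N) ?sum_j0 //; last first.
    by move=> j; rewrite /AD hi.
  by apply: leq_trans K1.
rewrite big1_eq mulr1 big_nat_recr //= big_ltn //=.
rewrite (eq_bigl (fun j : 'I_K => nat_of_ord j == 0)%N); last first.
  by move=> j; rewrite /AD /=; case: eqP => [e|//]; move: oi0; rewrite -e.
rewrite sum_j0; last by lia.
rewrite mul1r /Q big_nat_recr //= mulrCA.
apply: congM.
  apply: eq_cong; apply: eq_big_nat => i /andP[h1 h2].
  have e1 : (i0 < i)%N = false by lia.
  have e2 : (i == i0) = false by apply/eqP; lia.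
  have e3 : (i == 0)%N = false by apply/eqP; lia.
  rewrite /g; case: ifP => oi.
    by rewrite /O; apply: eq_bigl => j; rewrite /AD e1 e2 e3 oi.
  rewrite (eq_bigl (fun j : 'I_K => nat_of_ord j <= 1)%N) ?sum_j1 //.
  by move=> j; rewrite /AD e1 e2 e3 oi.
rewrite /g oi0 (eq_bigl (fun j : 'I_K => 2 <= nat_of_ord j)%N); last first.
  by move=> j; rewrite /AD ltnn eqxx.
exact: sum_j2.
Qed.

Lemma sum_odd (F : nat -> P) L :
  \sum_(0 <= i < L.*2 | odd i) F i = \sum_(k < L) F k.*2.+1.
Proof.
elim: L => [|L IH]; first by rewrite big_geq ?big_ord0.
rewrite big_ord_recr /= -IH doubleS !big_mkcond /= !big_nat_recr //=.
by rewrite odd_double /= addr0 [in RHS]big_mkcond.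
Qed.

Definition TD N : P :=
  \sum_(i0 < N.+1 | odd i0) \prod_(i < N.+1) \sum_(j < N.+1 | AD i0 i j) 'X^(i * j).

Lemma TD_T N : cong N.+1 (TD N) (T N.+1 N.+1).
Proof.
set K := N.+1.
apply: (@cong_trans _ _ (\sum_(i0 < K | odd i0) 'X^(i0.*2) * Q K i0)).
  by rewrite /TD; apply: cong_sum => i0 oi0; apply: TD_term.
rewrite -(big_mkord odd (fun i0 => 'X^(i0.*2) * Q K i0)).
apply: (@cong_trans _ _ (\sum_(0 <= i0 < K.*2 | odd i0) 'X^(i0.*2) * Q K i0)).
  rewrite [X in cong _ _ X](big_cat_nat _ (n := K)) //=; last by rewrite -addnn leq_addr.
  apply: cong_sym; apply: cong_add0; rewrite big_nat_cond; apply: cong_sum0 => i.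
  case/andP=> /andP[hi _] _; rewrite mulrC; apply: congX0; rewrite -addnn; lia.
rewrite sum_odd /T /D; apply: cong_refl.
Qed.

Lemma cong_prod1 K (I : Type) (r : seq I) (R : pred I) (F : I -> P) :
  (forall i, R i -> cong K (F i) 1) -> cong K (\prod_(i <- r | R i) F i) 1.
Proof.
move=> h; apply: (big_ind (fun x => cong K x 1)); first exact: cong_refl.
  by move=> x y hx hy; rewrite -(mulr1 1); apply: congM.
exact: h.
Qed.

Lemma cong_prod_nat K m n (F G : nat -> P) :
  (forall i, (m <= i < n)%N -> cong K (F i) (G i)) ->
  cong K (\prod_(m <= i < n) F i) (\prod_(m <= i < n) G i).
Proof.
move=> h; rewrite big_nat_cond [X in cong _ _ X]big_nat_cond.
by apply: cong_prod => i /andP[hi _]; apply: h.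
Qed.

Definition f4 i : P := if (4 %| i)%N then 1 - 'X^i else 1.
Definition e4 i : P := if odd i then 1 else 1 - 'X^(i.*2).

Lemma e_f M : \prod_(1 <= i < M.+1) e4 i = \prod_(1 <= i < (M.*2).+1) f4 i.
Proof.
elim: M => [|M IH]; first by rewrite !big_geq.
rewrite big_nat_recr // IH doubleS (big_nat_recr M.*2.+2) // (big_nat_recr M.*2.+1) //=.
have h1 : (4 %| M.*2.+1)%N = false.
  apply/negP => h; have : (2 %| M.*2.+1)%N by apply: dvdn_trans h.
  by rewrite dvdn2 /= odd_double.
have h2 : (4 %| M.*2.+2)%N = ~~ odd M.+1.
  by rewrite -doubleS -mul2n (@dvdn_pmul2l 2 2) // dvdn2.
rewrite /f4 /e4 h1 h2 mulr1 doubleS; case: (odd M.+1) => //=; rewrite mulr1 //.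
Qed.

Definition PP N : P := \prod_(i < N.+1) \sum_(j < N.+1 | A4 i j) 'X^(i * j).

Lemma PP_Q N : (0 < N)%N -> cong N.+1 (PP N) ((1 - 'X) * Q N.+1 N).
Proof.
move=> N0; set K := N.+1.
set U := \prod_(1 <= i < K) (1 - 'X^i : P).
set V := \prod_(1 <= i < K) O K i.
have UV : cong K (U * V) 1.
  rewrite /U /V -big_split /= big_nat_cond; apply: cong_prod1 => i /andP[/andP[hi _] _].
  exact: O_inv.
have hPP : PP N = \prod_(1 <= i < K) (if (1 < i)%N && ~~ (4 %| i)%N then O K i else 1).
  rewrite /PP -(big_mkord xpredT (fun i => \sum_(j < K | A4 i j) 'X^(i * j))) big_ltn //.
  rewrite (eq_bigl (fun j : 'I_K => nat_of_ord j == 0)%N); last first.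
    by move=> j; rewrite /A4 /= orbF.
  rewrite sum_j0 // mul1r; apply: eq_big_nat => i /andP[hi _]; case: ifP => h.
    by rewrite /O; apply: eq_bigl => j; rewrite /A4 h orbT.
  rewrite (eq_bigl (fun j : 'I_K => nat_of_ord j == 0)%N) ?sum_j0 //.
  by move=> j; rewrite /A4 h orbF.
have A : cong K (PP N * U) ((1 - 'X) * \prod_(1 <= i < K) f4 i).
  rewrite hPP /U -big_split /=.
  apply: (@cong_trans _ _ (\prod_(1 <= i < K) (if (1 < i)%N && ~~ (4 %| i)%N then 1 else 1 - 'X^i))).
    apply: cong_prod_nat => i /andP[hi _]; case: ifP => _; first by rewrite mulrC; apply: O_inv.
    by rewrite mul1r; apply: cong_refl.
  rewrite big_ltn // [X in cong _ _ (_ * X)]big_ltn //= /f4 /= mul1r expr1.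
  apply: eq_cong; congr (_ * _); apply: eq_big_nat => i /andP[hi _].
  by rewrite hi /=; case: (4 %| i)%N.
have B : cong K (Q K N * U) (\prod_(1 <= i < K) f4 i).
  rewrite /Q /U -big_split /=.
  apply: (@cong_trans _ _ (\prod_(1 <= i < K) e4 i)).
    apply: cong_prod_nat => i /andP[hi _]; rewrite /g /e4; case: ifP => _.
      by rewrite mulrC; apply: O_inv.
    by apply: eq_cong; rewrite -addnn exprD; ring.
  rewrite e_f (big_cat_nat _ (n := K)) //=; last by rewrite -addnn; lia.
  rewrite -[X in cong _ _ X](mulr1 (\prod_(1 <= i < K) f4 i)); apply: congMl.
  rewrite big_nat_cond; apply: cong_prod1 => i /andP[/andP[hi _] _].
  rewrite /f4; case: ifP => _; last exact: cong_refl.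
  rewrite -[X in cong _ _ X](subr0 1); apply: congB; first exact: cong_refl.
  exact: congX0'.
apply: (@cong_trans _ _ (PP N * U * V)).
  rewrite -mulrA -[X in cong _ X _](mulr1 (PP N)); apply: congMl; apply: cong_sym; exact: UV.
apply: (@cong_trans _ _ ((1 - 'X) * (Q K N * U) * V)).
  by apply: congMr; apply: cong_trans A _; apply: congMl; apply: cong_sym.
have -> : (1 - 'X) * (Q K N * U) * V = (1 - 'X) * Q K N * (U * V) by ring.
rewrite -[X in cong _ _ X](mulr1 ((1 - 'X) * Q K N)); apply: congMl; exact: UV.
Qed.


Lemma O_stab K K' i : (K' <= K)%N -> (1 <= i)%N -> cong K' (O K i) (O K' i).
Proof.
move=> le hi; rewrite /O -(big_mkord xpredT (fun j => 'X^(i * j))).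
rewrite -(big_mkord xpredT (fun j => 'X^(i * j))).
rewrite (big_cat_nat _ (n := K')) //=.
apply: cong_add0; rewrite big_nat_cond; apply: cong_sum0 => j /andP[/andP[hj _] _].
apply: congX0'; nia.
Qed.

Lemma Q_stab K K' m : (K' <= K)%N -> cong K' (Q K m) (Q K' m).
Proof.
move=> le; rewrite /Q; apply: cong_prod_nat => i /andP[hi _].
rewrite /g; case: ifP => _; first exact: O_stab.
exact: cong_refl.
Qed.

Lemma T_stab K K' : (K' <= K)%N -> cong K' (T K K) (T K' K').
Proof.
move=> le; apply: (@cong_trans _ _ (T K' K)).
  by rewrite /T; apply: cong_sum => k _; apply: congMl; rewrite /D; apply: Q_stab.
rewrite /T -(big_mkord xpredT (fun k => 'X^((k.*2.+1).*2) * D K' k)).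
rewrite -(big_mkord xpredT (fun k => 'X^((k.*2.+1).*2) * D K' k)).
rewrite (big_cat_nat _ (n := K')) //=.
apply: cong_add0; rewrite big_nat_cond; apply: cong_sum0 => k /andP[/andP[hk _] _].
rewrite mulrC; apply: congX0; rewrite -!addnn; lia.
Qed.

Lemma TD_stab n m : (m <= n)%N -> cong m.+1 (TD n) (TD m).
Proof.
move=> le.
apply: (@cong_trans _ _ (T n.+1 n.+1)); first by apply: cong_le (TD_T n).
apply: (@cong_trans _ _ (T m.+1 m.+1)); first exact: T_stab.
exact: cong_sym (TD_T m).
Qed.

Lemma DE2_TD m n : (m <= n)%N -> (DE2 m)%:R = (TD n)`_m.
Proof.
move=> le; rewrite DE2_coef -coef_sum -/(TD m).
apply: cong_coef (cong_sym (TD_stab le)) _; exact: ltnSn.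
Qed.

Lemma corollary2_aux (n : nat) (hn : (0 < n)%N) :
  (DE2 n + (if (3 <= n)%N then DE2 (n - 3) else 0))%N = P4 n.
Proof.
have key : cong n.+1 ((1 + 'X^3) * TD n) (PP n - 1).
  apply: (@cong_trans _ _ ((1 + 'X^3) * T n.+1 n.+1)); first by apply: congMl; apply: TD_T.
  apply: (@cong_trans _ _ ((1 - 'X) * Q n.+1 n - 1)); last first.
    by apply: congB; [apply: cong_sym; apply: PP_Q|apply: cong_refl].
  have := congB (main_T n) (cong_refl _ 1).
  by rewrite [X in cong _ _ X -> _]addrC addKr => h; apply: cong_sym.
have := cong_coef key (ltnSn n).
rewrite mulrDl mul1r coefD mulrC coefMXn coefB coef1 -(DE2_TD (leqnn n)) /PP.
rewrite -P4_coef.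
have -> : (n == 0)%N = false by apply/eqP; lia.
rewrite subr0.
case: ltnP => h3.
  rewrite addr0 => /eqP; rewrite eqr_nat => /eqP <-.
  by rewrite addn0.
rewrite -(@DE2_TD (n - 3) n); last by rewrite leq_subr.
rewrite -natrD => /eqP; rewrite eqr_nat => /eqP <-.
done.
Qed.

Local Close Scope ring_scope.

Theorem corollary2 (n : nat) (hn : 0 < n) :
  DE2 n + (if 3 <= n then DE2 (n - 3) else 0) = P4 n.
Proof. exact: corollary2_aux. Qed.
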